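(* Let $S$ be a reflective numerical semigroup with $\mathrm{g}(S)=g\ge1$ and $\mathrm{m}(S)=a$. Let $q=\lfloor g/a\rfloor$ and $r=g-qa$. Then \[ \mathrm{PF}(S)=\{g-(r-1),\,g-(r-2),\dots,g-1\}\cup\{2g-r\}, \] and in particular the type of $S$ equals $r$.
   Context: A numerical semigroup is a submonoid $S$ of $(\mathbb{N}_0,+)$ with finite complement. Its set of gaps is $\mathrm{H}(S)=\mathbb{N}_0\setminus S$, its genus is $\mathrm{g}(S)=\#\mathrm{H}(S)$, and its multiplicity $\mathrm{m}(S)$ is the smallest positive element of $S$. The set of pseudo-Frobenius numbers is $\mathrm{PF}(S)=\{h\in\mathrm{H}(S): h+s\in S\text{ for all } 0\ne s\in S\}$, and the type of $S$ is $\#\mathrm{PF}(S)$. A numerical semigroup $S$ of genus $g\ge1$ is called reflective if for every $z\in\{0,1,\dots,g-1\}$ exactly one of $z$ and $z+g$ belongs to $S$. (When $S$ is reflective, $a\nmid g$, so $1\le r\le a-1$.) *)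

(* Defs.v *)
From mathcomp Require Import all_boot.
Set Implicit Arguments. Unset Strict Implicit. Unset Printing Implicit Defensive.

Definition numerical_semigroup (S : pred nat) : Prop :=
  [/\ S 0,
      (forall x y, S x -> S y -> S (x + y)) &
      exists N, forall n, N <= n -> S n].

Definition genus (S : pred nat) (g : nat) : Prop :=
  exists gaps : seq nat, [/\ uniq gaps, (forall n, (n \in gaps) = ~~ S n) &
                             size gaps = g].

Definition multiplicity (S : pred nat) (a : nat) : Prop :=
  [/\ 0 < a, S a & forall n, 0 < n < a -> ~~ S n].

Definition PF (S : pred nat) (h : nat) : Prop :=
  ~~ S h /\ (forall s, S s -> s != 0 -> S (h + s)).

Definition semigroup_type (S : pred nat) (t : nat) : Prop :=
  exists l : seq nat, [/\ uniq l, (forall h, h \in l <-> PF S h) & size l = t].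

Definition reflective (S : pred nat) (g : nat) : Prop :=
  1 <= g /\ genus S g /\ (forall z, z < g -> S z (+) S (z + g)).

(* Main.v *)
Require Import Defs.
From mathcomp Require Import all_boot.
From mathcomp Require Import zify.

Lemma Smul S a : numerical_semigroup S -> multiplicity S a -> forall k, S (k * a).
Proof.
case=> S0 Sadd _ [_ Sa _]; elim=> [|k IH]; first by rewrite mul0n.
by rewrite mulSn; apply: Sadd.
Qed.

Lemma key S g a : numerical_semigroup S -> reflective S g -> multiplicity S a ->
  forall x, x < g -> S x = (a %| x).
Proof.
move=> ns [_ [_ refl]] mu; have [S0 Sadd _] := ns; have [a0 Sa small] := mu.
move=> x xg; apply/idP/idP; last first.
  by move=> /dvdnP [k ->]; apply: Smul.
move: xg; elim/ltn_ind: x => x IH xg Sx.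
case: (ltnP x a) => [xa|ax].
  case: x IH xg Sx xa => [|x] _ _; first by rewrite dvdn0.
  by move=> Sx xa; have := small x.+1; rewrite Sx xa => /(_ isT).
have Sy : S (x - a).
  apply/negPn/negP => nSy.
  have := refl (x - a) ltac:(lia); rewrite (negbTE nSy) /= => Syg.
  have := Sadd _ _ Syg Sa; rewrite (_ : x - a + g + a = x + g); last by lia.
  by have := refl x xg; rewrite Sx /= => /negbTE ->.
have d := IH (x - a) ltac:(lia) ltac:(lia) Sy.
have -> : x = x - a + a by lia.
by rewrite dvdn_add.
Qed.

Lemma mid S g a : numerical_semigroup S -> reflective S g -> multiplicity S a ->
  forall n, g <= n < 2 * g -> S n = ~~ (a %| n - g).
Proof.
move=> ns rf mu n hn; have [_ [_ refl]] := rf.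
have := refl (n - g) ltac:(lia); rewrite (_ : n - g + g = n); last by lia.
rewrite (@key S g a ns rf mu); last by lia.
by case: (a %| n - g); case: (S n).
Qed.

Lemma cnt (S : pred nat) g : (forall z, z < g -> S z (+) S (z + g)) ->
  forall m, m <= g -> count (fun z => ~~ S z) (iota 0 m) + count (fun z => ~~ S z) (iota g m) = m.
Proof.
move=> refl; elim=> [|m IH] hm; first by [].
rewrite -addn1 !iotaD !count_cat /= add0n addn0 addn0.
have := IH ltac:(lia); move: (refl m hm); rewrite (addnC m g).
by case: (S m); case: (S (g + m)) => //= _; lia.
Qed.

Lemma high S g a : numerical_semigroup S -> reflective S g -> multiplicity S a ->
  forall n, 2 * g <= n -> S n.
Proof.
move=> ns [_ [[gaps [ug hg sg] refl]]] mu n hn.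
apply/negPn/negP => nSn.
set l := n :: [seq z <- iota 0 (2 * g) | ~~ S z].
have ul : uniq l.
  rewrite /l /= filter_uniq ?iota_uniq // andbT mem_filter mem_iota; lia.
have sub : {subset l <= gaps}.
  move=> x; rewrite /l in_cons mem_filter hg => /orP [/eqP -> //|/andP [] //].
have := uniq_leq_size ul sub.
rewrite /l /= size_filter sg (_ : 2 * g = g + g); last by lia.
rewrite iotaD count_cat add0n cnt //; lia.
Qed.

Theorem mainTheorem7 (S : pred nat) (g a : nat) :
  numerical_semigroup S ->
  genus S g -> 1 <= g ->
  reflective S g ->
  multiplicity S a ->
  let q := g %/ a in
  let r := g - q * a in
  (forall h, PF S h <-> ((g - r < h < g) \/ h = 2 * g - r)) /\
  semigroup_type S r.
Proof.
move=> ns gen g1 rf mu q r.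
have [S0 Sadd _] := ns; have [a0 Sa small] := mu; have [_ [_ refl]] := rf.
have dg := divn_eq g a; have ra := ltn_pmod g a0.
have hr : r = g %% a by rewrite /r /q; lia.
have qa : g = q * a + r by rewrite hr.
have rlt : r < a by rewrite hr.
have Sg : ~~ S g by have := refl 0 g1; rewrite S0.
have r1 : 1 <= r.
  case: (posnP r) => // r0; move: Sg; rewrite qa r0 addn0 Smul //.
have ndv : forall x m u, 0 < u < a -> x = m * a + u -> ~~ (a %| x).
  move=> x m u hu ->; rewrite dvdn_addr ?dvdn_mull //.
  by apply/negP => /dvdn_leq; lia.
have K := @key S g a ns rf mu; have M := @mid S g a ns rf mu; have H := @high S g a ns rf mu.
have pos : forall s, S s -> s != 0 -> a <= s.
  move=> s Ss s0; case: (ltnP s a) => // sa.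
  by have := small s; rewrite Ss sa; lia.
have PFc : forall h, PF S h <-> ((g - r < h < g) \/ h = 2 * g - r).
  move=> h; split.
  - case=> nSh PFh.
    case: (ltnP h g) => hg.
      left; apply/andP; split => //; case: (ltnP (g - r) h) => // hle.
      exfalso.
      have h0 : h != 0 by apply/eqP => h0; move: nSh; rewrite h0 S0.
      rewrite K // in nSh.
      have hs : S (g + (q * a - h)).
        rewrite M; last by lia.
        rewrite (_ : g + (q * a - h) - g = q * a - h); last by lia.
        apply/negP => dd; move: nSh; rewrite (_ : h = q * a - (q * a - h)); last by lia.
        by rewrite dvdn_sub ?dvdn_mull.
      have := PFh _ hs ltac:(lia).
      rewrite M; last by lia.
      by rewrite (_ : h + (g + (q * a - h)) - g = q * a); [rewrite dvdn_mull|lia].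
    case: (ltnP h (2 * g)) => h2; last by rewrite H in nSh.
    right; rewrite M ?hg ?h2 ?negbK in nSh; last by lia.
    case/dvdnP: nSh => k hk.
    case: (ltngtP k q) => kq.
    + have : k.+1 * a <= q * a by rewrite leq_mul2r kq orbT.
      rewrite mulSn => le.
      have := PFh _ Sa ltac:(lia).
      rewrite M; last by lia.
      by rewrite (_ : h + a - g = (k.+1) * a) ?dvdn_mull //; rewrite mulSn; lia.
    + have : q.+1 * a <= k * a by rewrite leq_mul2r kq orbT.
      rewrite mulSn; lia.
    + subst k; lia.
  - move=> hh; split.
    + case: hh => [hh|->].
        rewrite K; last by lia.
        by apply: (ndv h q (h - q * a)); lia.
      rewrite M; last by lia.
      by rewrite negbK (_ : 2 * g - r - g = q * a) ?dvdn_mull //; lia.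
    + move=> s Ss s0; have as_ := pos s Ss s0.
      case: hh => [hh|->]; last by apply: H; lia.
      case: (ltnP s g) => sg.
        rewrite K // in Ss; case/dvdnP: Ss => k hk.
        case: k hk => [|m] hk; first by move: s0; rewrite hk.
        case: (ltnP (h + s) (2 * g)) => h2; last by apply: H.
        rewrite M; last by lia.
        apply: (ndv _ m (a - r + (h - (g - r)))); rewrite hk mulSn in h2 *; lia.
      case: (ltnP s (2 * g)) => s2; last by apply: H; lia.
      case: (ltnP (h + s) (2 * g)) => h2; last by apply: H.
      rewrite M; last by lia.
      apply: (ndv _ q (h + s - g - q * a)); first by lia.
      by lia.
split=> //.
exists (iota (g - r).+1 r.-1 ++ [:: 2 * g - r]); split.
- rewrite cat_uniq iota_uniq /= mem_iota andbT orbF; lia.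
- move=> h; rewrite PFc mem_cat mem_iota in_cons in_nil orbF.
  split.
  + by case/orP => [hh|/eqP ->]; [left|right]; lia.
  + by case=> [hh|->]; apply/orP; [left|right]; [lia|].
- by rewrite size_cat size_iota /=; lia.
Qed.
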